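(* Let $O=(o_{i,j})_{i,j=1}^k$ be a real $k\times k$ matrix, let $\alpha_{i,j}=o_{i,j}-o_{k,j}$ for $i=1,\ldots,k-1$, $j=1,\ldots,k$, and let $A$ be the $k\times k$ matrix whose first $k-1$ rows are $(\alpha_{i,1},\ldots,\alpha_{i,k})$, $i=1,\ldots,k-1$, and whose last row is $(1,\ldots,1)$. Suppose $A$ is invertible and let $\Lambda=(\Lambda_{i,j})=A^{-1}$. Assume (i) $o_{ii}>o_{ji}\ge 0$ for all $i\ne j$; (ii) $\Lambda_{i,k}>0$ for all $i=1,\ldots,k$; (iii) $\sum_{j=1}^k o_{i,j}\Lambda_{j,k}>1$ for all $i=1,\ldots,k-1$. Then $\mathbf{f}^D=(f^D_1,\ldots,f^D_k)$ with $f^D_j=\Lambda_{j,k}$ is a Dutch book solution, and for every $\mathbf{p}$ in the simplex and every $i$, $$G(\mathbf{f}^D)=\prod_{l=1}^k\Big(\sum_{j=1}^k o_{l,j}f^D_j\Big)^{p_l}=\sum_{j=1}^k o_{i,j}\Lambda_{j,k}.$$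
   Context: $\Delta_{k-1}=\{\mathbf{x}\in[0,1]^k: x_1+\cdots+x_k=1\}$. For $\mathbf{f}\in\Delta_{k-1}$, $\overline{o}_i(\mathbf{f})=\sum_{j=1}^k o_{i,j}f_j$, and for $\mathbf{p}\in\Delta_{k-1}$, $G(\mathbf{f})=\prod_{i=1}^k\overline{o}_i(\mathbf{f})^{p_i}$. A Dutch book solution is an $\mathbf{f}\in\Delta_{k-1}$ with $\overline{o}_1(\mathbf{f})=\overline{o}_2(\mathbf{f})=\cdots=\overline{o}_k(\mathbf{f})>1$. *)

(* Defs.v *)
From HB Require Import structures.
From mathcomp Require Import all_boot all_order all_algebra.
From mathcomp Require Import reals exp.
Set Implicit Arguments. Unset Strict Implicit. Unset Printing Implicit Defensive.
Import Order.TTheory GRing.Theory Num.Theory.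
Local Open Scope ring_scope.

Section Defs.
Variable R : realType.

Definition in_simplex (k : nat) (x : 'I_k -> R) : Prop :=
  (forall i, 0 <= x i <= 1) /\ \sum_(i < k) x i = 1.

Definition obar (k : nat) (O : 'M[R]_k) (f : 'I_k -> R) (i : 'I_k) : R :=
  \sum_(j < k) O i j * f j.

Definition Gfun (k : nat) (O : 'M[R]_k) (p f : 'I_k -> R) : R :=
  \prod_(i < k) powR (obar O f i) (p i).

Definition dutch_book (k : nat) (O : 'M[R]_k) (f : 'I_k -> R) : Prop :=
  in_simplex f /\ (forall i j, obar O f i = obar O f j) /\
  (forall i, 1 < obar O f i).

Definition Amat (n : nat) (O : 'M[R]_n.+1) : 'M[R]_n.+1 :=
  \matrix_(i, j) if i == ord_max then 1 else O i j - O ord_max j.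
End Defs.

(* Main.v *)
Require Import Defs.
From HB Require Import structures.
From mathcomp Require Import all_boot all_order all_algebra.
From mathcomp Require Import reals exp.
Import Order.TTheory GRing.Theory Num.Theory.
Local Open Scope ring_scope.

Lemma prod_powR (R : realType) (k : nat) (c : R) (p : 'I_k -> R) :
  0 < c -> \prod_(i < k) powR c (p i) = powR c (\sum_(i < k) p i).
Proof.
move=> c0; elim/big_rec2: _ => [|i x y _ ->]; first by rewrite powRr0.
rewrite powRD; first by []. by apply/implyP => _; rewrite gt_eqF.
Qed.

Theorem lemma1 (R : realType) (n : nat) (O : 'M[R]_n.+2) :
  Amat O \in unitmx ->
  (forall i j : 'I_n.+2, i != j -> O i i > O j i /\ O j i >= 0) ->
  (forall i : 'I_n.+2, (invmx (Amat O)) i ord_max > 0) ->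
  (forall i : 'I_n.+2, i != ord_max ->
     \sum_(j < n.+2) O i j * (invmx (Amat O)) j ord_max > 1) ->
  dutch_book O (fun j => (invmx (Amat O)) j ord_max) /\
  (forall (p : 'I_n.+2 -> R), in_simplex p -> forall i : 'I_n.+2,
     Gfun O p (fun j => (invmx (Amat O)) j ord_max)
       = \sum_(j < n.+2) O i j * (invmx (Amat O)) j ord_max).
Proof.
move=> Au _ Lpos H3.
set L := invmx (Amat O).
have AL := mulmxV Au; rewrite -/L in AL.
have row i : \sum_j Amat O i j * L j ord_max = (i == ord_max)%:R.
  by move/matrixP: AL => /(_ i ord_max); rewrite !mxE.
have sum1 : \sum_j L j ord_max = 1.
  transitivity (\sum_j Amat O ord_max j * L j ord_max); last by rewrite row eqxx.
  by apply: eq_bigr => j _; rewrite mxE eqxx mul1r.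
have eqmax i : obar O (fun j => L j ord_max) i = obar O (fun j => L j ord_max) ord_max.
  case: (eqVneq i ord_max) => [->//|ne].
  apply/eqP; rewrite -subr_eq0; apply/eqP.
  rewrite /obar -sumrB -[RHS](_ : (i == ord_max)%:R = 0); last by rewrite (negbTE ne).
  rewrite -row; apply: eq_bigr => j _; by rewrite mxE (negbTE ne) mulrBl.
have gt1 : 1 < obar O (fun j => L j ord_max) ord_max.
  have ne : (ord0 : 'I_n.+2) != ord_max by rewrite -val_eqE.
  by rewrite -(eqmax ord0); exact: H3.
have allgt i : 1 < obar O (fun j => L j ord_max) i by rewrite eqmax.
split.
  split; last by split => // i j; rewrite !eqmax.
  split => // i; rewrite (ltW (Lpos i)) /= -sum1.
  rewrite (bigD1 i) //= lerDl; apply: sumr_ge0 => j _; exact: ltW.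
move=> p [_ sp] i; rewrite /Gfun.
under eq_bigr => l _ do rewrite eqmax.
rewrite prod_powR ?sp ?powRr1; last by apply: lt_trans gt1.
  by rewrite -(eqmax i).
by apply: ltW; apply: lt_trans gt1.
Qed.
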